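(* Let $a,b,c$ be nonnegative integers. Then the game $(a,b)^*$ (two-pile \textsc{Nim} with a pass) has Grundy value $c$ if and only if the game $(a,b,c)^*$ (three-pile \textsc{Nim} with a pass) is a $\mathcal{P}$-position.
   Context: All games are finite impartial games under normal play. A game is identified with its set of options; $\mathbf{E}$ denotes the game with no options. Nimbers: $*0\equiv\mathbf{E}$, $*n\equiv\{*0,\dots,*(n-1)\}$. The disjunctive sum is $G+H\equiv\{g+H,\ G+h\}$. The \textsc{Nim} position $(a_1,\dots,a_k)$ is $*a_1+\dots+*a_k$. For a game $G$, the game with a pass $G^*$ is defined recursively: $G^*\equiv\mathbf{E}$ if $G\equiv\mathbf{E}$, and otherwise $G^*\equiv\{G,\ g^*\}$ where $g$ ranges over the options of $G$ (i.e. once in the game a player may ''pass'', moving to $G$ itself, but only while some move remains). A $\mathcal{P}$-position is a game all of whose options are $\mathcal{N}$-positions; an $\mathcal{N}$-position has some option that is a $\mathcal{P}$-position. The Grundy value of a game $G$ is the unique $c$ such that $G+*c$ is a $\mathcal{P}$-position (equivalently, recursively the mex of the Grundy values of its options). *)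

(* Defs.v *)
From mathcomp Require Import all_boot.
Set Implicit Arguments. Unset Strict Implicit. Unset Printing Implicit Defensive.

Inductive game : Type := Game : seq game -> game.

Definition E : game := Game [::].

Definition options (g : game) : seq game := let: Game l := g in l.

(* nims n = [:: *0; ...; *(n-1)] ;  *n = Game (nims n) *)
Fixpoint nims (n : nat) : seq game :=
  match n with
  | 0 => [::]
  | n'.+1 => rcons (nims n') (Game (nims n'))
  end.

Definition nimber (n : nat) : game := Game (nims n).

(* Disjunctive sum: G + H = { g + H, G + h }. *)
Fixpoint gsum (g h : game) {struct g} : game :=
  match g with
  | Game l1 =>
    let fix sr (h : game) : game :=
      match h with
      | Game l2 => Game (map (fun x => gsum x h) l1 ++ map sr l2)
      end in sr h
  end.

(* Game with a pass: E^* = E, G^* = {G, g^*} otherwise. *)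
Fixpoint gpass (g : game) : game :=
  match g with
  | Game l =>
    match l with
    | [::] => Game [::]
    | _ :: _ => Game (Game l :: map gpass l)
    end
  end.

Fixpoint isP (g : game) : bool :=
  match g with
  | Game l => all (fun h => ~~ isP h) l
  end.

Definition mex (s : seq nat) : nat := find (fun n => n \notin s) (iota 0 (size s).+1).

Fixpoint grundy (g : game) : nat :=
  match g with
  | Game l => mex (map grundy l)
  end.

Definition nim2 (a b : nat) : game := gsum (nimber a) (nimber b).
Definition nim3 (a b c : nat) : game := gsum (gsum (nimber a) (nimber b)) (nimber c).

Example ex1 : grundy (nimber 5) = 5. Proof. by []. Qed.
Example ex2 : grundy (nim2 3 5) = 6. Proof. by []. Qed.
Example ex3 : isP (nim3 1 2 3). Proof. by []. Qed.
Example ex4 : gpass E = E. Proof. by []. Qed.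

(* Main.v *)
Require Import Defs.
From mathcomp Require Import all_boot.
From Stdlib Require List.

Lemma game_ind2 (P : game -> Prop)
  (H : forall l, List.Forall P l -> P (Game l)) : forall g, P g.
Proof.
fix F 1. intros [l]. apply H.
induction l as [|x l IH]; constructor; [exact (F x)|exact IH].
Qed.

Lemma gsumE l1 l2 : gsum (Game l1) (Game l2) =
  Game (map (fun x => gsum x (Game l2)) l1 ++ map (gsum (Game l1)) l2).
Proof. by []. Qed.

Lemma iotaSr c : iota 0 c.+1 = rcons (iota 0 c) c.
Proof. by rewrite -addn1 iotaD cats1. Qed.

Lemma nimsE c : nims c = map nimber (iota 0 c).
Proof.
elim: c => [//|c IH].
by rewrite iotaSr map_rcons -IH.
Qed.

Lemma gsumN g c : gsum g (nimber c) =
  Game (map (fun x => gsum x (nimber c)) (options g) ++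
        map (fun c' => gsum g (nimber c')) (iota 0 c)).
Proof. case: g => l. by rewrite /nimber gsumE nimsE -map_comp. Qed.

Lemma mex_notin s : mex s \notin s.
Proof.
rewrite /mex.
have Hh : has (fun n => n \notin s) (iota 0 (size s).+1).
  apply/negPn; rewrite -all_predC; apply/negP => /allP Hall.
  have Hsub : {subset iota 0 (size s).+1 <= s} by move=> x /Hall /= /negPn.
  have := uniq_leq_size (iota_uniq 0 (size s).+1) Hsub.
  by rewrite size_iota ltnn.
have := nth_find 0 Hh.
rewrite nth_iota ?add0n //. by move: Hh; rewrite has_find size_iota.
Qed.

Lemma mex_lt s n : n < mex s -> n \in s.
Proof.
rewrite /mex => Hn.
have Hle := find_size (fun n => n \notin s) (iota 0 (size s).+1).
rewrite size_iota in Hle.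
have := before_find 0 Hn.
rewrite nth_iota ?add0n; last by apply: leq_trans Hle.
by move/negPn.
Qed.

Lemma mex_eq s c : (mex s == c) = (c \notin s) && (c <= mex s).
Proof.
apply/eqP/andP.
  by move=> <-; split; [apply: mex_notin|].
case=> Hc Hle. apply/eqP. rewrite eqn_leq Hle andbT.
rewrite leqNgt. apply/negP => /mex_lt H. by rewrite H in Hc.
Qed.

Lemma all_iota_neq m c : all (fun c' => m != c') (iota 0 c) = (c <= m).
Proof.
elim: c => [//|c IH]. rewrite iotaSr all_rcons IH andbC.
by case: ltngtP.
Qed.

Lemma grundyP g : forall c, isP (gsum g (nimber c)) = (grundy g == c).
Proof.
elim/game_ind2: g => l IHl c.
elim/ltn_ind: c => c IHc.
rewrite gsumN /= all_cat all_map all_map.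
have -> : all (preim (fun x => gsum x (nimber c)) (fun h => ~~ isP h)) l =
          (c \notin map grundy l).
  elim: l IHl {IHc} => [//|x l IH] /List.Forall_cons_iff [Hx Hl] /=.
  by rewrite Hx IH // inE negb_or eq_sym.
have -> : all (preim (fun c' => gsum (Game l) (nimber c')) (fun h => ~~ isP h))
            (iota 0 c) = all (fun c' => grundy (Game l) != c') (iota 0 c).
  apply: eq_in_all => c'. rewrite mem_iota add0n => /andP [_ Hc'].
  change (~~ isP (gsum (Game l) (nimber c')) = (grundy (Game l) != c')).
  by rewrite IHc.
by rewrite all_iota_neq /= mex_eq.
Qed.

Lemma gpassE h : 0 < size (options h) -> gpass h = Game (h :: map gpass (options h)).
Proof. by case: h => [[|y s]]. Qed.

Lemma isPE l : isP (Game l) = all (fun h => ~~ isP h) l.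
Proof. by []. Qed.

Lemma allC (T : Type) (a : pred T) y s : all a (y :: s) = a y && all a s.
Proof. by []. Qed.

Lemma passP G : forall c,
  isP (gpass (gsum G (nimber c))) = isP (gsum (gpass G) (nimber c)).
Proof.
elim/game_ind2: G => l IHl c.
case: l IHl => [|x l] IHl.
  have -> : gpass (Game [::]) = Game [::] by [].
  rewrite grundyP.
  case: c => [//|c].
  by rewrite gsumN /=.
elim/ltn_ind: c => c IHc.
set xl := x :: l.
set G := Game xl.
have Hopt : options (gsum G (nimber c)) =
  map (fun y => gsum y (nimber c)) xl ++
  map (fun c' => gsum G (nimber c')) (iota 0 c) by rewrite gsumN.
have Hgp : options (gpass G) = G :: map gpass xl by [].
have Hsz : 0 < size (options (gsum G (nimber c))) by rewrite Hopt size_cat.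
have IHxl := IHl. rewrite -/xl in IHxl.
have IHc' : forall m, m < c ->
  isP (gpass (gsum G (nimber m))) = isP (gsum (gpass G) (nimber m)) := IHc.
clearbody G xl.
rewrite (gpassE _ Hsz).
rewrite [gsum (gpass G) _]gsumN !isPE Hopt.
rewrite Hgp map_cons cat_cons !allC !map_cat !all_cat !all_map.
congr (_ && (_ && _)).
  clear -IHxl. elim: xl IHxl => [//|y s IH] /List.Forall_cons_iff [Hy Hs].
  rewrite !allC IH //. congr (_ && _).
  change (~~ isP (gpass (gsum y (nimber c))) = ~~ isP (gsum (gpass y) (nimber c))).
  by rewrite Hy.
apply: eq_in_all => c'. rewrite mem_iota add0n => /andP [_ Hc'].
change (~~ isP (gpass (gsum G (nimber c'))) = ~~ isP (gsum (gpass G) (nimber c'))).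
by rewrite IHc'.
Qed.

Theorem mainTheorem8 (a b c : nat) :
  grundy (gpass (nim2 a b)) = c <-> isP (gpass (nim3 a b c)).
Proof.
rewrite /nim3 -/(nim2 a b) passP grundyP. split; by move/eqP.
Qed.
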